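(* For all $t_1, t_2 \in \mathcal{L}_r$, $t_1 =_{\mathcal{L}} t_2$ if and only if $t_1 = t_2$ (i.e. they have the same set of sublevels).
   Context: $\mathcal{X}$ is a countable set of variables; a valuation is $\sigma\colon\mathcal{X}\to\mathbb{N}$. For finite $E\subseteq\mathcal{X}$, $x\in\mathcal{X}$, $S\in\mathbb{N}$, the sublevels $A(E,x,S)$ and $B(E,S)$ have values $[A(E,x,S)]_\sigma = 0$ if some $y\in E$ has $\sigma(y)=0$, and $\sigma(x)+S$ otherwise; $[B(E,S)]_\sigma=0$ if some $y\in E$ has $\sigma(y)=0$, and $S$ otherwise. $\mathcal{L}_s$ is the set of sublevels $A(E,x,S)$ with $x\in E$ and $B(E,S)$ with $S>0$. $t_1\leqslant_{\mathcal{L}} t_2$ (resp. $t_1 =_{\mathcal{L}} t_2$) means $[t_1]_\sigma\le[t_2]_\sigma$ (resp. $=$) for every valuation $\sigma$; $\max$ of a finite family is evaluated pointwise (empty max has value $0$). Two sublevels $u,v$ are incomparable if neither $u\leqslant_{\mathcal{L}} v$ nor $v\leqslant_{\mathcal{L}} u$. A minimal representation is a formal expression $\max(u_1,\ldots,u_n)$ where $\{u_1,\ldots,u_n\}$ is a finite set of pairwise incomparable elements of $\mathcal{L}_s$; $\mathcal{L}_r$ is the set of minimal representations. *)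

(* Defs.v *)
From Stdlib Require List.
From mathcomp Require Import all_boot finmap.
Set Implicit Arguments. Unset Strict Implicit. Unset Printing Implicit Defensive.
Local Open Scope fset_scope.

Inductive sublevel (X : countType) : Type :=
| SA of {fset X} & X & nat
| SB of {fset X} & nat.

Definition eval_sub (X : countType) (sigma : X -> nat) (u : sublevel X) : nat :=
  match u with
  | SA E x n => if has (fun y => sigma y == 0) E then 0 else addn (sigma x) n
  | SB E n => if has (fun y => sigma y == 0) E then 0 else n
  end.

Definition in_Ls (X : countType) (u : sublevel X) : Prop :=
  match u with
  | SA E x _ => x \in E
  | SB _ n => leq 1 n
  end.

Definition leL (X : countType) (u v : sublevel X) : Prop :=
  forall sigma : X -> nat, leq (eval_sub sigma u) (eval_sub sigma v).

Definition incomparable (X : countType) (u v : sublevel X) : Prop :=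
  ~ leL u v /\ ~ leL v u.

(* A formal max(u_1,...,u_n) is given by a list of sublevels (only the
   underlying set matters); its value is the pointwise max (0 if empty). *)
Definition eval_max (X : countType) (sigma : X -> nat) (t : seq (sublevel X)) : nat :=
  foldr maxn 0%N (map (eval_sub sigma) t).

Definition in_Lr (X : countType) (t : seq (sublevel X)) : Prop :=
  (forall u, List.In u t -> in_Ls u) /\
  (forall u v, List.In u t -> List.In v t -> u <> v -> incomparable u v).

Definition eqL (X : countType) (t1 t2 : seq (sublevel X)) : Prop :=
  forall sigma : X -> nat, eval_max sigma t1 = eval_max sigma t2.

Definition same_set (X : countType) (t1 t2 : seq (sublevel X)) : Prop :=
  forall u, List.In u t1 <-> List.In u t2.

(* Main.v *)
Require Import Defs.
From mathcomp Require Import all_boot finmap zify.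
From Stdlib Require List Classical_Prop.
Set Implicit Arguments. Unset Strict Implicit.

Lemma hasF_sub (X : countType) (tau : X -> nat) (E E' : {fset X}) :
  {subset E' <= E} -> ~~ has (fun y => tau y == 0) E -> ~~ has (fun y => tau y == 0) E'.
Proof. move=> sub /hasPn H; apply/hasPn => y /sub; exact: H. Qed.

Lemma max_ge (X : countType) sigma (t : seq (sublevel X)) u :
  List.In u t -> eval_sub sigma u <= eval_max sigma t.
Proof.
elim: t => //= v t IH [->|/IH]; rewrite /eval_max /=; lia.
Qed.

Lemma max_le (X : countType) sigma (t : seq (sublevel X)) m :
  (forall u, List.In u t -> eval_sub sigma u <= m) -> eval_max sigma t <= m.
Proof.
elim: t => [|v t IH] H; rewrite /eval_max //=.
have := H v (or_introl erefl).
have := IH (fun u Hu => H u (or_intror Hu)); rewrite /eval_max; lia.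
Qed.

Lemma max_att (X : countType) sigma (t : seq (sublevel X)) :
  0 < eval_max sigma t -> exists v, List.In v t /\ eval_sub sigma v = eval_max sigma t.
Proof.
elim: t => [|v t IH] //=; rewrite /eval_max /= => H.
case: (leqP (foldr maxn 0 [seq eval_sub sigma i | i <- t]) (eval_sub sigma v)) => h.
  by exists v; split; [left|].
have [|w [Hw Hw']] := IH; first by move: H h; rewrite /eval_max; case: (foldr _ _ _).
by exists w; split; [right|].
Qed.

Definition cst (X : countType) (u : sublevel X) := match u with SA _ _ n => n | SB _ n => n end.
Definition Kt (X : countType) (t : seq (sublevel X)) := foldr (fun v acc => cst v + acc) 0 t.
Lemma Kt_ge (X : countType) (t : seq (sublevel X)) u : List.In u t -> cst u <= Kt t.
Proof. elim: t => //= v t IH [->|/IH]; lia. Qed.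

Lemma dominate (X : countType) (t : seq (sublevel X)) u :
  in_Ls u -> (forall v, List.In v t -> in_Ls v) ->
  (forall sigma, eval_sub sigma u <= eval_max sigma t) ->
  exists v, List.In v t /\ leL u v.
Proof.
case: u => [E x n|E n] Hu Ht Hle; rewrite /= in Hu.
- pose N := Kt t + n + 2.
  pose sigma := fun z => if z == x then N else if z \in E then 1 else 0.
  have Hs : eval_sub sigma (SA E x n) = N + n.
    rewrite /= ifN; first by rewrite /sigma eqxx.
    apply/hasPn => z zE; have zE2 : z \in E := zE; rewrite /sigma; case: (z =P x) => _; first by rewrite /N addn2.
    by rewrite zE2.
  have := Hle sigma; rewrite Hs => HM.
  have [v [vt Hv]] : exists v, List.In v t /\ eval_sub sigma v = eval_max sigma t by apply: max_att; move: HM; rewrite /N; case: (eval_max _ _) => //; rewrite addn2 addSn. 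
  have := Kt_ge vt; have := Ht v vt.
  case: v vt Hv => [E' x' n'|E' n'] vt Hv /= _ Hk; move: HM; rewrite -Hv /=.
  + case: ifP => hz; first lia.
    have sub : {subset E' <= E}.
      move=> z zE'; move/hasPn: hz => /(_ z zE'); rewrite /sigma.
      by case: (z =P x) => [->|_]; [|case: (z \in E)].
    case: (eqVneq x' x) => [ex|nx]; last first.
      rewrite /sigma (negbTE nx); case: (x' \in E); lia.
    subst x'; rewrite /sigma eqxx => hn.
    exists (SA E' x n'); split => // tau /=.
    case: ifP => // hE; rewrite (negbTE (hasF_sub sub (negbT hE))); lia.
  + case: ifP => _; lia.
- pose sigma := fun z => if z \in E then 1 else 0.
  have Hs : eval_sub sigma (SB E n) = n.
    rewrite /= ifN //; apply/hasPn => z zE; have zE2 : z \in E := zE; by rewrite /sigma zE2.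
  have := Hle sigma; rewrite Hs => HM.
  have [v [vt Hv]] := max_att (leq_trans Hu HM).
  have := Ht v vt.
  case: v vt Hv => [E' x' n'|E' n'] vt Hv /= Hv'; move: HM; rewrite -Hv /=;
    (case: ifP => hz; first lia);
    (have sub : {subset E' <= E} by
      move=> z zE'; move/hasPn: hz => /(_ z zE'); rewrite /sigma; case: (z \in E));
    [exists (SA E' x' n')|exists (SB E' n')]; split => // tau /=;
    case: ifP => // hE; rewrite (negbTE (hasF_sub sub (negbT hE))) //.
  have xE : x' \in E := sub _ Hv'.
  move: HM; rewrite /sigma xE => h.
  have : tau x' != 0 by move/hasPn: (negbT hE) => /(_ x' xE).
  lia.
Qed.

Definition supp (X : countType) (u : sublevel X) := match u with SA E _ _ => E | SB E _ => E end.

Lemma pos_hasF (X : countType) (tau : X -> nat) (E : {fset X}) :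
  (forall z, 0 < tau z) -> has (fun y => tau y == 0) E = false.
Proof. move=> H; apply/negbTE/hasPn => z _; apply/eqP => h; by move: (H z); rewrite h. Qed.

Lemma zero_iff (X : countType) (u : sublevel X) y : in_Ls u ->
  (eval_sub (fun z => if z == y then 0 else 1) u == 0) = (y \in supp u).
Proof.
have hh : forall E : {fset X}, has (fun z => (if z == y then 0 else 1) == 0) E = (y \in E).
  move=> E; apply/hasP/idP => [[z zE]|yE]; last by exists y => //; rewrite eqxx.
  by case: (z =P y) => // <-.
case: u => [E x n|E n] /= Hu; rewrite hh; case: ifP => // yE.
  by case: (x =P y) => [ex|]; [move: Hu; rewrite ex yE|].
by apply/negbTE; rewrite -lt0n.
Qed.

Lemma antisym (X : countType) (u v : sublevel X) : in_Ls u -> in_Ls v ->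
  (forall sigma, eval_sub sigma u = eval_sub sigma v) -> u = v.
Proof.
move=> Hu Hv H.
have es : supp u = supp v by apply/fsetP => y; rewrite -!zero_iff // H.
have H1 := H (fun _ => 1).
case: u v Hu Hv H es H1 => [E x n|E n] [E' x' n'|E' n'] /= Hu Hv H es;
  rewrite ?pos_hasF // => H1; subst E'.
- have := H (fun z => if z == x then 2 else 1); rewrite /= pos_hasF; last by move=> z; case: (z == x).
  rewrite eqxx; case: (x' =P x) => [->|_]; first by move: H1 => /eqP; rewrite eqn_add2l => /eqP ->.
  move: H1 => /eqP; rewrite eqn_add2l => /eqP ->; lia.
- have := H (fun z => if z == x then 2 else 1); rewrite /= pos_hasF; last by move=> z; case: (z == x).
  rewrite eqxx; lia.
- have := H (fun z => if z == x' then 2 else 1); rewrite /= pos_hasF; last by move=> z; case: (z == x').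
  rewrite eqxx; lia.
- by rewrite H1.
Qed.

Lemma leL_trans (X : countType) (u v w : sublevel X) : leL u v -> leL v w -> leL u w.
Proof. move=> h1 h2 s; exact: leq_trans (h1 s) (h2 s). Qed.

Lemma half (X : countType) (t1 t2 : seq (sublevel X)) :
  in_Lr t1 -> in_Lr t2 -> eqL t1 t2 -> forall u, List.In u t1 -> List.In u t2.
Proof.
move=> [L1 I1] [L2 I2] E u ut.
have Hd : forall s, eval_sub s u <= eval_max s t2 by move=> s; rewrite -E; exact: max_ge.
have [v [vt uv]] := dominate (L1 u ut) L2 Hd.
have Hd' : forall s, eval_sub s v <= eval_max s t1 by move=> s; rewrite E; exact: max_ge.
have [w [wt vw]] := dominate (L2 v vt) L1 Hd'.
have uw := leL_trans uv vw.
case: (Classical_Prop.classic (u = w)) => [ew|nw]; last by case: (I1 u w ut wt nw).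
subst w.
have -> // : u = v.
apply: antisym (L1 u ut) (L2 v vt) _ => s; apply/eqP; rewrite eqn_leq; by rewrite uv vw.
Qed.

Theorem proposition33 (X : countType) (t1 t2 : seq (sublevel X)) :
  in_Lr t1 -> in_Lr t2 -> (eqL t1 t2 <-> same_set t1 t2).
Proof.
move=> H1 H2; split => [E u|S s].
  split; first exact: half.
  apply: half => // s; by rewrite E.
apply/eqP; rewrite eqn_leq; apply/andP; split; apply: max_le => u /S; exact: max_ge.
Qed.
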